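(* Let $R_\bullet$ and $\omega_q,(\omega_q)_j$ be as in the context, and let $(\mu,\nu)$ be a $(p,q)$-shuffle. Then for $1\le j\le q$ one has $s_\mu(y_j)=y_{\nu_j+1}$ in $R_{p+q}$, and hence in $\Omega(R_{p+q})$ $$s_\mu(\omega_q)=\prod_{t\in\{\nu_1,\dots,\nu_q\}}{\bf d}y_{t+1},\qquad s_\mu((\omega_q)_j)=\prod_{t\in\{\nu_1,\dots,\widehat{\nu_j},\dots,\nu_q\}}{\bf d}y_{t+1}.$$
   Context: Fix $n\ge1$, $|x|\ge1$. $R_\bullet$ is the simplicial graded $\mathbb{F}_2$-algebra with $R_q=\mathbb{F}_2[x,y_1,\dots,y_q]$, $|y_i|=(n+1)|x|$, with algebra face and degeneracy maps $s_i(x)=x$, $d_i(x)=x$, $s_i(y_j)=y_j$ if $i\ge j$, $s_i(y_j)=y_{j+1}$ if $i<j$; $d_i(y_j)=x^{n+1}$ if $i=0,j=1$; $d_i(y_j)=y_{j-1}$ if $i<j,j>1$; $d_i(y_j)=y_j$ if $i\ge j,j<q$; $d_q(y_q)=0$. $\Omega$ denotes the de Rham complex functor (free $A$-algebra on ${\bf d}a$, $a\in A$, modulo additivity, Leibniz rule and $({\bf d}a)^2=0$), applied degreewise. $\omega_q={\bf d}y_1\cdots{\bf d}y_q$ and $(\omega_q)_j$ is $\omega_q$ with ${\bf d}y_j$ omitted. A $(p,q)$-shuffle $(\mu,\nu)$ consists of two increasing sequences $\mu_1<\dots<\mu_p$ and $\nu_1<\dots<\nu_q$ whose union is $\{0,1,\dots,p+q-1\}$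 (disjointly), and $s_\mu=s_{\mu_p}\cdots s_{\mu_1}:R_q\to R_{p+q}$ (extended to $\Omega$). *)

(* Defs.v *)
From HB Require Import structures.
From mathcomp Require Import all_boot all_algebra.
From mathcomp Require Import mpoly.
Set Implicit Arguments. Unset Strict Implicit. Unset Printing Implicit Defensive.
Import GRing.Theory.
Local Open Scope ring_scope.

(* R_q = F_2[x, y_1, ..., y_q]: variable 0 is x, variable j (1 <= j <= q) is y_j. *)
Definition R (q : nat) := {mpoly 'F_2[q.+1]}.

Definition xv (q : nat) : R q := 'X_(@ord0 q).
Definition yv (q : nat) (j : nat) : R q := 'X_(@inord q j).

Definition degen (i q : nat) (a : R q) : R q.+1 :=
  a \mPo [tuple (if (k : nat) == 0%N then xv q.+1
                 else if (k <= i)%N then yv q.+1 k else yv q.+1 k.+1) | k < q.+1].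

(* composite of degeneracies, applied in the order of the list: the head of
   the list is applied LAST.  smu_rev q [:: m_p; ...; m_1] = s_{m_p} o ... o s_{m_1} *)
Fixpoint smu_rev (q : nat) (l : seq nat) : R q -> R (size l + q)%N :=
  match l return R q -> R (size l + q)%N with
  | [::] => fun a => a
  | m :: l' => fun a => degen m (smu_rev l' a)
  end.

Definition smu (q : nat) (mu : seq nat) : R q -> R (size (rev mu) + q)%N :=
  @smu_rev q (rev mu).

Definition is_shuffle (p q : nat) (mu nu : seq nat) : Prop :=
  [/\ size mu = p, size nu = q, sorted ltn mu, sorted ltn nu
    & perm_eq (mu ++ nu) (iota 0 (p + q))].

(* De Rham complex of the polynomial ring R_q over F_2: an element is
   sum_S a_S dv_S, with S a set of variables and dv_S the product of the dv_k,
   k in S (char. 2: no signs; (dv)^2 = 0 gives the disjointness condition). *)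
Definition Omega (q : nat) := {ffun {set 'I_q.+1} -> R q}.

Definition omul (q : nat) (w1 w2 : Omega q) : Omega q :=
  [ffun U => \sum_(S : {set 'I_q.+1}) \sum_(T : {set 'I_q.+1} |
                 (S :&: T == set0) && (S :|: T == U)) w1 S * w2 T].

Definition oone (q : nat) : Omega q := [ffun U => (U == set0)%:R].

Definition oemb (q : nat) (a : R q) : Omega q :=
  [ffun U => if U == set0 then a else 0].

Definition oprod (q : nat) (l : seq (Omega q)) : Omega q := foldr (@omul q) (oone q) l.

Definition dR (q : nat) (a : R q) : Omega q :=
  [ffun U => \sum_(k : 'I_q.+1 | U == [set k]) a^`M(k)].

Definition Omap (q r : nat) (f : R q -> R r) (w : Omega q) : Omega r :=
  \sum_(S : {set 'I_q.+1})
     omul (oemb (f (w S))) (oprod [seq dR (f 'X_k) | k <- enum S]).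

Definition omega (q : nat) : Omega q := oprod [seq dR (yv q j) | j <- iota 1 q].
Definition omega_hat (q j : nat) : Omega q :=
  oprod [seq dR (yv q i) | i <- iota 1 q & i != j].

(* Main.v *)
Require Import Defs.
From mathcomp Require Import all_boot all_algebra.
From mathcomp Require Import mpoly.
From mathcomp Require Import zify.


Definition stp (c m : nat) := if (c <= m)%N then c else c.+1.
Definition stp0 (d m : nat) := if (d < m)%N then d else d.+1.

Lemma stp_stp0 mu d : foldl stp d.+1 mu = (foldl stp0 d mu).+1.
Proof.
elim: mu d => [|m mu IH] d //=.
by rewrite /stp /stp0; case: ifP => _; rewrite IH.
Qed.

Lemma count_lt_iota k n : (k <= n)%N -> count (fun x => (x < k)%N) (iota 0 n) = k.
Proof.
move=> H; rewrite -(subnKC H) iotaD count_cat.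
rewrite (eq_in_count (a2 := predT)); last by move=> x; rewrite mem_iota.
rewrite count_predT size_iota.
rewrite (eq_in_count (a2 := pred0)); last first.
  by move=> x; rewrite mem_iota /= => /andP[H1 _]; rewrite ltnNge H1.
by rewrite count_pred0 addn0.
Qed.

Lemma count_lt_nth s k : sorted ltn s -> (k < size s)%N ->
  count (fun x => (x < nth 0 s k)%N) s = k.
Proof.
move=> Hs Hk.
rewrite -[s in count _ s](mkseq_nth 0) /mkseq count_map.
rewrite (eq_in_count (a2 := fun i => (i < k)%N)).
  by rewrite count_lt_iota // ltnW.
move=> i; rewrite mem_iota /= => Hi.
have Hlt := sorted_ltn_nth ltn_trans 0 Hs.
case: (ltngtP i k) => Hik.
- by apply: Hlt => //; rewrite inE.
- apply/negbTE; rewrite -leqNgt ltnW //.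
  by apply: Hlt => //; rewrite inE.
- by rewrite Hik ltnn.
Qed.

Lemma inv_stp0 mu d : sorted ltn mu ->
  (foldl stp0 d mu \notin mu) &&
  (foldl stp0 d mu == d + count (fun m => (m < foldl stp0 d mu)%N) mu)%N.
Proof.
elim/last_ind: mu => [|s m IH] /=.
  by rewrite addn0.
rewrite sorted_pairwise; last exact: ltn_trans.
rewrite pairwise_rcons => /andP[Hall Hs].
rewrite -(sorted_pairwise ltn_trans) in Hs.
move: (IH Hs) => /andP[Hn /eqP He].
rewrite foldl_rcons /stp0.
set r0 := foldl stp0 d s in Hn He *.
rewrite mem_rcons in_cons -cats1 count_cat /=.
case: ltnP => Hrm.
- rewrite (negbTE Hn) orbF.
  have -> : (m < r0)%N = false by apply/negbTE; rewrite -leqNgt ltnW.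
  rewrite addn0 /= addn0 -He eqxx andbT; apply/negP => /eqP E; by rewrite E ltnn in Hrm.
- have Hc : forall t, (m <= t)%N -> count (fun x => (x < t)%N) s = size s.
    move=> t Ht; apply/eqP; rewrite -all_count; apply/allP => x Hx.
    by apply: (leq_trans _ Ht); move/allP: Hall => /(_ x Hx).
  have E1 := Hc r0.+1 (leqW Hrm).
  have E2 := Hc r0 Hrm.
  rewrite E2 in He; rewrite E1.
  have -> : (r0.+1 \in s) = false.
    apply/negP => Hx; move/allP: Hall => /(_ _ Hx) /= Hx'; lia.
  rewrite orbF; apply/andP; split.
    by apply/negP => /eqP E; lia.
  have -> : (m < r0.+1)%N by lia.
  apply/eqP; rewrite /=; lia.
Qed.

Lemma shuffle_foldl p q mu nu j : is_shuffle p q mu nu -> (1 <= j <= q)%N ->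
  foldl stp j mu = (nth 0 nu j.-1).+1.
Proof.
case=> Hmu Hnu Smu Snu Hperm /andP[H1 H2].
have -> : j = j.-1.+1 by rewrite prednK.
rewrite stp_stp0; congr S.
set d := j.-1.
have Hd : (d < q)%N by rewrite /d; lia.
move: (inv_stp0 mu d Smu) => /andP[Hn /eqP He].
set r := foldl stp0 d mu in Hn He *.
have Hr : (r < p + q)%N.
  have := count_size (fun m => (m < r)%N) mu; rewrite Hmu; lia.
have Hrnu : r \in nu.
  have : r \in mu ++ nu by rewrite (perm_mem Hperm) mem_iota.
  by rewrite mem_cat (negbTE Hn).
have Hk := nth_index 0 Hrnu.
have Hki : (index r nu < size nu)%N by rewrite index_mem.
have Hcnt := count_lt_nth _ _ Snu Hki; rewrite Hk in Hcnt.
have Hci := count_lt_iota _ _ (ltnW Hr).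
rewrite -(permP Hperm) count_cat Hcnt in Hci.
have Hc' : (count (fun x => (x < r)%N) mu + index r nu = count (fun x => (x < r)%N) mu + d)%N.
  by rewrite Hci addnC; exact: He.
move/eqP: Hc'; rewrite eqn_add2l => /eqP Hid.
by rewrite /= -Hid Hk.
Qed.

Import GRing.Theory.
Local Open Scope ring_scope.

Lemma degen_y i n c : (1 <= c <= n)%N -> degen i (yv n c) = yv n.+1 (stp c i).
Proof.
case/andP=> H1 H2.
rewrite /degen /yv comp_mpolyXU -tnth_nth tnth_mktuple inordK; last by lia.
have -> : (c == 0%N) = false by lia.
by rewrite /stp; case: ifP.
Qed.

Definition G (l : seq nat) (k : nat) := foldr (fun m c => stp c m) k l.

Lemma smu_rev_y q l k : (1 <= k <= q)%N ->
  smu_rev l (yv q k) = yv (size l + q) (G l k) /\ (1 <= G l k <= size l + q)%N.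
Proof.
move=> Hk; elim: l => [|m l [IH1 IH2]] //=.
split; first by rewrite IH1 degen_y.
rewrite /stp; case: ifP => _; lia.
Qed.

Lemma smu_rev0 q l : smu_rev l (0 : R q) = 0.
Proof. by elim: l => [|m l IH] //=; rewrite IH /degen comp_mpoly0. Qed.

Lemma smu_rev1 q l : smu_rev l (1 : R q) = 1.
Proof. by elim: l => [|m l IH] //=; rewrite IH /degen comp_mpoly1. Qed.

Lemma part1 p q mu nu j : is_shuffle p q mu nu -> (1 <= j <= q)%N ->
  smu mu (yv q j) = yv (size (rev mu) + q)%N (nth 0%N nu j.-1).+1.
Proof.
move=> Hs Hj; rewrite /smu (smu_rev_y q (rev mu) j Hj).1; congr yv.
by rewrite /G -(shuffle_foldl _ _ _ _ _ Hs Hj) -{2}(revK mu) foldl_rev.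
Qed.

Definition e q (S : {set 'I_q.+1}) : Omega q := [ffun U => (U == S)%:R].
Arguments e {q}.

Lemma dR_X q (k : 'I_q.+1) : dR ('X_k) = e [set k].
Proof.
apply/ffunP => U; rewrite !ffunE.
rewrite (eq_bigr (fun k' => ((k == k')%:R : R q))); last first.
  move=> k' _; rewrite mderivX mnm1E; case: eqP => [->|_].
    have -> : (U_(k') - U_(k'))%MM = 0%MM.
      by apply/mnmP => i; rewrite mnmBE mnm0E subnn.
    by rewrite mpolyX0 scale1r.
  by rewrite scale0r.
case: (eqVneq U [set k]) => [->|HU].
  rewrite (big_pred1 k) ?eqxx // => k' /=.
  by apply/eqP/eqP => [/set1_inj ->|->].
rewrite big1 // => k' /eqP HU'; case: eqP => // Ek; by rewrite HU' Ek eqxx in HU.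
Qed.

Lemma omul_e1 q (k : 'I_q.+1) (S : {set 'I_q.+1}) : k \notin S -> omul (e [set k]) (e S) = e (k |: S).
Proof.
move=> HkS; apply/ffunP => U; rewrite !ffunE.
rewrite (bigD1 [set k]) //= [X in _ + X]big1 ?addr0; last first.
  move=> S' HS'; apply: big1 => T _; by rewrite !ffunE (negbTE HS') mul0r.
rewrite big_mkcond (bigD1 S) //= [X in _ + X]big1 ?addr0; last first.
  move=> T HT; rewrite !ffunE (negbTE HT) mulr0; by case: ifP.
rewrite !ffunE !eqxx mulr1.
have -> : ([set k] :&: S == set0) by rewrite setI_eq0 disjoints1.
by rewrite /= eq_sym; case: eqP.
Qed.

Lemma oprod_dR q (s : seq 'I_q.+1) : uniq s ->
  oprod [seq dR 'X_k | k <- s] = e [set:: s].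
Proof.
elim: s => [|k s IH] /=.
  by move=> _; rewrite set_nil; apply/ffunP => U; rewrite !ffunE.
case/andP=> Hk Hu; rewrite IH // dR_X set_cons omul_e1 //.
by rewrite inE.
Qed.

Lemma oemb_omul q (a : R q) w : omul (oemb a) w = [ffun U => a * w U].
Proof.
apply/ffunP => U; rewrite !ffunE.
rewrite (bigD1 set0) //= [X in _ + X]big1 ?addr0; last first.
  move=> S HS; apply: big1 => T _; by rewrite !ffunE (negbTE HS) mul0r.
rewrite (eq_bigl (fun T => T == U)); last by move=> T; rewrite set0I set0U eqxx.
by rewrite big_pred1_eq !ffunE eqxx.
Qed.

Lemma Omap_e q r (f : R q -> R r) (S : {set 'I_q.+1}) : f 0 = 0 -> f 1 = 1 ->
  Omap f (e S) = oprod [seq dR (f 'X_k) | k <- enum S].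
Proof.
move=> f0 f1; rewrite /Omap (bigD1 S) //= [X in _ + X]big1 ?addr0; last first.
  move=> S' HS'; rewrite ffunE (negbTE HS') /= f0 oemb_omul.
  by apply/ffunP => U; rewrite !ffunE mul0r.
rewrite ffunE eqxx /= f1 oemb_omul; apply/ffunP => U; by rewrite !ffunE mul1r.
Qed.

Definition ordlt n : rel 'I_n := fun a b => (val a < val b)%N.

Lemma enum_set_sorted n (s : seq 'I_n) : sorted (@ordlt n) s -> enum [set:: s] = s.
Proof.
move=> Hs; apply: (@irr_sorted_eq _ (@ordlt n)) => //.
- by move=> a b c; rewrite /ordlt; apply: ltn_trans.
- by move=> a; rewrite /ordlt ltnn.
- have : sorted ltn (map val (enum [set:: s])).
    rewrite -[enum _](eq_filter (mem_enum _)).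
    rewrite -(eq_filter (mem_map val_inj _)) -filter_map.
    by rewrite (sorted_filter ltn_trans) // unlock val_ord_enum iota_ltn_sorted.
  by rewrite sorted_map.
- by move=> x; rewrite mem_enum inE.
Qed.

Lemma main_map p q mu nu (l : seq nat) : is_shuffle p q mu nu ->
  all (fun j => (1 <= j <= q)%N) l -> sorted ltn l ->
  Omap (@smu q mu) (oprod [seq dR (yv q j) | j <- l])
  = oprod [seq dR (yv (size (rev mu) + q)%N (nth 0%N nu j.-1).+1) | j <- l].
Proof.
move=> Hs Hall Hl.
set s := [seq (inord j : 'I_q.+1) | j <- l].
have -> : [seq dR (yv q j) | j <- l] = [seq dR 'X_k | k <- s].
  by rewrite /s -map_comp.
have Ss : sorted (@ordlt _) s.
  rewrite /s sorted_map.
  apply: (@sub_in_sorted _ (fun j => (1 <= j <= q)%N) ltn) Hall Hl.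
  move=> a b /andP[_ Ha] /andP[_ Hb]; rewrite /ordlt /= !inordK //; lia.
have Us : uniq s.
  apply: (sorted_uniq (leT := @ordlt _)) Ss.
  - by move=> a b c; rewrite /ordlt; apply: ltn_trans.
  - by move=> a; rewrite /ordlt ltnn.
rewrite oprod_dR // Omap_e; last 2 first.
- exact: smu_rev0.
- exact: smu_rev1.
rewrite enum_set_sorted // /s -map_comp; congr oprod.
apply/eq_in_map => j Hj /=.
by rewrite (part1 _ _ _ _ _ Hs) //; move/allP: Hall => /(_ j Hj).
Qed.

Theorem lemma2p4 (p q : nat) (mu nu : seq nat) :
  is_shuffle p q mu nu ->
  (forall j : nat, (1 <= j <= q)%N ->
     smu mu (yv q j) = yv (size (rev mu) + q)%N (nth 0%N nu j.-1).+1) /\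
  Omap (@smu q mu) (omega q)
    = oprod [seq dR (yv (size (rev mu) + q)%N t.+1) | t <- nu] /\
  (forall j : nat, (1 <= j <= q)%N ->
     Omap (@smu q mu) (omega_hat q j)
       = oprod [seq dR (yv (size (rev mu) + q)%N t.+1) | t <- nu & t != nth 0%N nu j.-1]).
Proof.
move=> Hs; split; first by move=> j; exact: part1 Hs.
have Hsh := Hs; case: Hsh => _ Hnusz _ Snu _.
have Hnu : nu = [seq nth 0%N nu j.-1 | j <- iota 1 q].
  rewrite -[1%N]/(1 + 0)%N iotaDl -map_comp.
  by rewrite -{1}(mkseq_nth 0%N nu) Hnusz /mkseq.
have Hall : all (fun j => (1 <= j <= q)%N) (iota 1 q).
  apply/allP => j; rewrite mem_iota; lia.
split.
  rewrite /omega (main_map _ _ _ _ _ Hs Hall (iota_ltn_sorted _ _)).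
  by rewrite [in RHS]Hnu -map_comp.
move=> j Hj.
rewrite /omega_hat (main_map _ _ _ _ _ Hs); last 2 first.
- by apply/allP => i; rewrite mem_filter => /andP[_]; move/allP: Hall => H /H.
- by apply: (sorted_filter ltn_trans); exact: iota_ltn_sorted.
have -> : [seq t <- nu | t != nth 0%N nu j.-1]
          = [seq nth 0%N nu i.-1 | i <- iota 1 q & i != j].
  transitivity [seq t <- [seq nth 0%N nu i.-1 | i <- iota 1 q] | t != nth 0%N nu j.-1].
    by rewrite -Hnu.
  rewrite filter_map; congr map; apply: eq_in_filter => i Hi /=.
  have Uq : uniq nu by apply: (sorted_uniq ltn_trans ltnn).
  rewrite nth_uniq // ?Hnusz; first by move: Hi; rewrite mem_iota; lia.
  + by move: Hi; rewrite mem_iota; lia.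
  + by lia.
by rewrite -map_comp.
Qed.
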